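(* Let $\mathbb X,\mathbb Y$ be Euclidean spaces, $\Phi\colon\mathbb X\rightrightarrows\mathbb Y$ a set-valued mapping whose graph is closed locally around $(\bar x,\bar y)\in\operatorname{gph}\Phi$, $u\in\mathbb S_{\mathbb X}$, and $\gamma\ge1$. If $\ker D^*_\gamma\Phi((\bar x,\bar y);(u,0))\subset\{0\}$, then $\Phi$ is metrically pseudo-subregular of order $\gamma$ at $(\bar x,\bar y)$ in direction $u$.
   Context: Pseudo-coderivative of order $\gamma$: $x^*\in D^*_\gamma\Phi((\bar x,\bar y);(u,v))(y^* )$ iff there are $u_k\to u$, $v_k\to v$, $t_k\downarrow0$, $x_k^*\to x^*$, $y_k^*\to y^*$ with $(x_k^*,-y_k^*/(t_k\|u_k\|)^{\gamma-1})\in\widehat{\mathcal N}_{\operatorname{gph}\Phi}(\bar x+t_ku_k,\bar y+(t_k\|u_k\|)^\gamma v_k)$ for all $k$ ($\widehat{\mathcal N}$ the regular normal cone); $\ker\Psi=\{y^*\mid 0\in\Psi(y^* )\}$. Metric pseudo-subregularity of order $\gamma$ in direction $u$: there are $\varepsilon,\delta,\kappa>0$ with $\|x-\bar x\|^{\gamma-1}\operatorname{dist}(x,\Phi^{-1}(\bar y))\le\kappa\operatorname{dist}(\bar y,\Phi(x))$ for all $x\in\bar x+\mathbb B_{\varepsilon,\delta}(u)$, where $\mathbb B_{\varepsilon,\delta}(u)=\{w\mid\|\|w\|u-\|u\|w\|\le\delta\|u\|\|w\|,\ \|w\|\le\varepsilon\}$. *)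

(* Defs.v *)
From HB Require Import structures.
From mathcomp Require Import all_boot all_order all_algebra.
From mathcomp Require Import boolp classical_sets reals constructive_ereal ereal exp.
Set Implicit Arguments. Unset Strict Implicit. Unset Printing Implicit Defensive.
Import Order.TTheory GRing.Theory Num.Theory.
Local Open Scope classical_set_scope.
Local Open Scope ring_scope.

Section Euclid.
Variable R : realType.

Definition dotv (n : nat) (a b : 'rV[R]_n) : R := \sum_(i < n) a 0 i * b 0 i.
Definition enorm (n : nat) (a : 'rV[R]_n) : R := Num.sqrt (dotv a a).

(* Euclidean distance from a point to a set (+oo for the empty set) *)
Definition edist (n : nat) (x : 'rV[R]_n) (S : set 'rV[R]_n) : \bar R :=
  ereal_inf [set (enorm (x - y))%:E | y in S].

Definition vcvg (n : nat) (a : nat -> 'rV[R]_n) (l : 'rV[R]_n) : Prop :=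
  forall e : R, 0 < e -> exists N : nat, forall k : nat, (N <= k)%N -> enorm (a k - l) < e.

Definition rcvg (a : nat -> R) (l : R) : Prop :=
  forall e : R, 0 < e -> exists N : nat, forall k : nat, (N <= k)%N -> `|a k - l| < e.

Definition gph (n m : nat) (Phi : 'rV[R]_n -> set 'rV[R]_m) : set ('rV[R]_n * 'rV[R]_m) :=
  [set p | Phi p.1 p.2].

Definition dotp (n m : nat) (a b : 'rV[R]_n * 'rV[R]_m) : R := dotv a.1 b.1 + dotv a.2 b.2.
Definition enormp (n m : nat) (a : 'rV[R]_n * 'rV[R]_m) : R :=
  Num.sqrt (dotv a.1 a.1 + dotv a.2 a.2).

(* regular (Fréchet) normal cone of Om at z:
   limsup_{z' -> z, z' in Om} <zeta, z' - z> / |z' - z| <= 0; empty if z ∉ Om *)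
Definition reg_normal (n m : nat) (Om : set ('rV[R]_n * 'rV[R]_m)) (z : 'rV[R]_n * 'rV[R]_m)
  : set ('rV[R]_n * 'rV[R]_m) :=
  [set zeta | Om z /\
     forall e : R, 0 < e -> exists d : R, 0 < d /\
       forall z' : 'rV[R]_n * 'rV[R]_m, Om z' ->
         enormp (z'.1 - z.1, z'.2 - z.2) < d ->
         dotp zeta (z'.1 - z.1, z'.2 - z.2) <= e * enormp (z'.1 - z.1, z'.2 - z.2)].

Definition pseudo_coderiv (n m : nat) (Phi : 'rV[R]_n -> set 'rV[R]_m) (gamma : R)
  (xb : 'rV[R]_n) (yb : 'rV[R]_m) (u : 'rV[R]_n) (v : 'rV[R]_m) (ys : 'rV[R]_m)
  : set 'rV[R]_n :=
  [set xs | exists (uk : nat -> 'rV[R]_n) (vk : nat -> 'rV[R]_m) (tk : nat -> R)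
              (xsk : nat -> 'rV[R]_n) (ysk : nat -> 'rV[R]_m),
     [/\ vcvg uk u /\ vcvg vk v, (forall k, 0 < tk k) /\ rcvg tk 0,
         vcvg xsk xs, vcvg ysk ys &
         forall k : nat,
           reg_normal (gph Phi)
             (xb + tk k *: uk k, yb + ((tk k * enorm (uk k)) `^ gamma) *: vk k)
             (xsk k, - (((tk k * enorm (uk k)) `^ (gamma - 1))^-1) *: ysk k)]].

Definition kerM (n m : nat) (Psi : 'rV[R]_m -> set 'rV[R]_n) : set 'rV[R]_m :=
  [set ys | Psi ys 0].

Definition dir_ball (n : nat) (eps delta : R) (u : 'rV[R]_n) : set 'rV[R]_n :=
  [set w | enorm (enorm w *: u - enorm u *: w) <= delta * enorm u * enorm w
           /\ enorm w <= eps].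

Definition metric_pseudo_subreg (n m : nat) (Phi : 'rV[R]_n -> set 'rV[R]_m) (gamma : R)
  (xb : 'rV[R]_n) (yb : 'rV[R]_m) (u : 'rV[R]_n) : Prop :=
  exists eps delta kappa : R, [/\ 0 < eps, 0 < delta, 0 < kappa &
    forall x : 'rV[R]_n, dir_ball eps delta u (x - xb) ->
      (((enorm (x - xb)) `^ (gamma - 1))%:E * edist x [set x' | Phi x' yb] <=
        kappa%:E * edist yb (Phi x))%E].

(* graph of Phi closed locally around (xb,yb): its intersection with some
   closed ball around (xb,yb) is (sequentially) closed *)
Definition gph_locally_closed (n m : nat) (Phi : 'rV[R]_n -> set 'rV[R]_m)
  (xb : 'rV[R]_n) (yb : 'rV[R]_m) : Prop :=
  exists r : R, 0 < r /\
    forall (zk : nat -> 'rV[R]_n * 'rV[R]_m) (z : 'rV[R]_n * 'rV[R]_m),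
      (forall k, gph Phi (zk k) /\ enormp ((zk k).1 - xb, (zk k).2 - yb) <= r) ->
      (forall e : R, 0 < e -> exists N : nat, forall k : nat, (N <= k)%N ->
          enormp ((zk k).1 - z.1, (zk k).2 - z.2) < e) ->
      gph Phi z.

End Euclid.

(* Main.v *)
Require Import Defs.
From HB Require Import structures.
From mathcomp Require Import all_boot all_order all_algebra.
From mathcomp Require Import boolp classical_sets reals constructive_ereal ereal exp.
From mathcomp Require Import topology normedtype sequences.
From mathcomp Require Import lra ring.
Set Implicit Arguments. Unset Strict Implicit. Unset Printing Implicit Defensive.
Import Order.TTheory GRing.Theory Num.Theory.
Import numFieldNormedType.Exports.
Local Open Scope classical_set_scope.
Local Open Scope ring_scope.
Section Eu.
Variable R : realType.
Implicit Types (n : nat).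

Lemma dotvC n (a b : 'rV[R]_n) : dotv a b = dotv b a.
Proof. by apply: eq_bigr => i _; rewrite mulrC. Qed.

Lemma dotvDl n (a b c : 'rV[R]_n) : dotv (a + b) c = dotv a c + dotv b c.
Proof. by rewrite /dotv -big_split; apply: eq_bigr => i _; rewrite mxE mulrDl. Qed.

Lemma dotvZl n k (a b : 'rV[R]_n) : dotv (k *: a) b = k * dotv a b.
Proof. by rewrite /dotv mulr_sumr; apply: eq_bigr => i _; rewrite mxE mulrA. Qed.

Lemma dotvNl n (a b : 'rV[R]_n) : dotv (- a) b = - dotv a b.
Proof. by rewrite -scaleN1r dotvZl mulN1r. Qed.

Lemma dotvDr n (a b c : 'rV[R]_n) : dotv c (a + b) = dotv c a + dotv c b.
Proof. by rewrite dotvC dotvDl !(dotvC c). Qed.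

Lemma dotvZr n k (a b : 'rV[R]_n) : dotv b (k *: a) = k * dotv b a.
Proof. by rewrite dotvC dotvZl dotvC. Qed.

Lemma dotvNr n (a b : 'rV[R]_n) : dotv b (- a) = - dotv b a.
Proof. by rewrite dotvC dotvNl dotvC. Qed.

Lemma dotvBl n (a b c : 'rV[R]_n) : dotv (a - b) c = dotv a c - dotv b c.
Proof. by rewrite dotvDl dotvNl. Qed.

Lemma dotvBr n (a b c : 'rV[R]_n) : dotv c (a - b) = dotv c a - dotv c b.
Proof. by rewrite dotvDr dotvNr. Qed.

Lemma dotv0r n (a : 'rV[R]_n) : dotv a 0 = 0.
Proof. by rewrite /dotv big1 // => i _; rewrite mxE mulr0. Qed.

Lemma dotv0l n (a : 'rV[R]_n) : dotv 0 a = 0.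
Proof. by rewrite dotvC dotv0r. Qed.

Lemma dotv_ge0 n (a : 'rV[R]_n) : 0 <= dotv a a.
Proof. by rewrite /dotv sumr_ge0 // => i _; rewrite -expr2 sqr_ge0. Qed.

Lemma dotv_eq0 n (a : 'rV[R]_n) : dotv a a = 0 -> a = 0.
Proof.
move=> /eqP; rewrite psumr_eq0; last by move=> i _; rewrite -expr2 sqr_ge0.
move=> /allP H; apply/rowP => i; rewrite mxE.
by have := H i (mem_index_enum i); rewrite /= mulf_eq0 orbb => /eqP.
Qed.

Lemma enorm_ge0 n (a : 'rV[R]_n) : 0 <= enorm a.
Proof. exact: sqrtr_ge0. Qed.

Lemma enorm_sq n (a : 'rV[R]_n) : enorm a ^+ 2 = dotv a a.
Proof. by rewrite sqr_sqrtr // dotv_ge0. Qed.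

Lemma enorm0 n : enorm (0 : 'rV[R]_n) = 0.
Proof. by rewrite /enorm dotv0r sqrtr0. Qed.

Lemma enorm_eq0 n (a : 'rV[R]_n) : enorm a = 0 -> a = 0.
Proof. by move=> h; apply: dotv_eq0; rewrite -enorm_sq h expr0n. Qed.

Lemma enorm_gt0 n (a : 'rV[R]_n) : a != 0 -> 0 < enorm a.
Proof.
move=> a0; rewrite lt_neqAle enorm_ge0 andbT; apply/eqP => h.
by move: a0; rewrite (enorm_eq0 (esym h)) eqxx.
Qed.

Lemma enormZ n k (a : 'rV[R]_n) : enorm (k *: a) = `|k| * enorm a.
Proof.
by rewrite /enorm dotvZl dotvZr mulrA sqrtrM ?sqr_ge0 // -expr2 sqrtr_sqr.
Qed.

Lemma enormN n (a : 'rV[R]_n) : enorm (- a) = enorm a.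
Proof. by rewrite -scaleN1r enormZ normrN1 mul1r. Qed.

Lemma enormB n (a b : 'rV[R]_n) : enorm (a - b) = enorm (b - a).
Proof. by rewrite -enormN opprB. Qed.

Lemma CS n (a b : 'rV[R]_n) : `|dotv a b| <= enorm a * enorm b.
Proof.
have [b0|bn0] := eqVneq b 0.
  by rewrite b0 dotv0r normr0 mulr_ge0 // enorm_ge0.
set A := dotv a a; set B := dotv b b; set C := dotv a b.
have Bp : 0 < B by rewrite /B -enorm_sq exprn_gt0 // enorm_gt0.
have h := dotv_ge0 (B *: a - C *: b).
rewrite !(dotvBl, dotvBr, dotvZl, dotvZr) -/A -/B -/C (dotvC b a) -/C in h.
have h2 : C ^+ 2 <= A * B.
  have : 0 <= B * (A * B - C ^+ 2) by lra.
  by rewrite pmulr_rge0 // subr_ge0.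
have ea := enorm_ge0 a; have eb := enorm_ge0 b.
have : A = enorm a ^+ 2 by rewrite enorm_sq.
have : B = enorm b ^+ 2 by rewrite enorm_sq.
move=> HB HA; rewrite HA HB in h2.
have hc : `|C| ^+ 2 <= (enorm a * enorm b) ^+ 2 by rewrite real_normK ?num_real // exprMn.
rewrite -ler_sqr ?nnegrE ?mulr_ge0 //.
Qed.

Lemma enorm_sqD n (c h : 'rV[R]_n) :
  enorm (c + h) ^+ 2 = enorm c ^+ 2 + 2 * dotv c h + enorm h ^+ 2.
Proof.
rewrite !enorm_sq; move: c h => c h.
by rewrite dotvDl !dotvDr (dotvC h c); ring.
Qed.

Lemma dotv_le n (a b : 'rV[R]_n) : dotv a b <= enorm a * enorm b.
Proof. exact: le_trans (ler_norm _) (CS a b). Qed.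

Lemma enormD n (a b : 'rV[R]_n) : enorm (a + b) <= enorm a + enorm b.
Proof.
have h : enorm (a + b) ^+ 2 <= (enorm a + enorm b) ^+ 2.
  rewrite enorm_sq dotvDl !dotvDr (dotvC b a) -!enorm_sq.
  have := dotv_le a b; nra.
by rewrite -ler_sqr ?nnegrE ?addr_ge0 ?enorm_ge0.
Qed.

Lemma enormDB n (a b c : 'rV[R]_n) : enorm (a - c) <= enorm (a - b) + enorm (b - c).
Proof. by rewrite (le_trans _ (enormD _ _)) // addrA subrK. Qed.

Lemma enorm_sub_ge n (a b : 'rV[R]_n) : enorm a - enorm b <= enorm (a - b).
Proof. by have := enormD (a - b) b; rewrite subrK; lra. Qed.

Lemma enorm_coord n (a : 'rV[R]_n) i : `|a 0 i| <= enorm a.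
Proof.
rewrite -ler_sqr ?nnegrE ?enorm_ge0 // enorm_sq real_normK ?num_real //.
rewrite /dotv (bigD1 i) //= expr2 lerDl sumr_ge0 // => j _; rewrite -expr2 sqr_ge0.
by [].
Qed.

Lemma enorm_le_coord n (a : 'rV[R]_n) c : 0 <= c ->
  (forall i, `|a 0 i| <= c) -> enorm a <= Num.sqrt (n%:R) * c.
Proof.
move=> c0 H; rewrite -(ger0_norm c0) -sqrtr_sqr -sqrtrM ?ler0n //.
apply: ler_wsqrtr.
rewrite /dotv (@le_trans _ _ (\sum_(i < n) c ^+ 2)) //.
  apply: ler_sum => i _; rewrite -expr2 -real_normK ?num_real //.
  by rewrite lerXn2r ?nnegrE // (le_trans _ (H i)).
by rewrite sumr_const card_ord mulr_natl.
Qed.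

End Eu.
Section Cv.
Variable R : realType.
Implicit Types (n : nat).

Definition incr (f : nat -> nat) := forall k, (f k < f k.+1)%N.

Lemma incr_ge f : incr f -> forall k, (k <= f k)%N.
Proof. move=> hf; elim=> [//|k IH]; exact: leq_ltn_trans IH (hf k). Qed.

Lemma incr_mono f : incr f -> forall i j, (i <= j)%N -> (f i <= f j)%N.
Proof.
move=> hf i j /subnK <-; elim: (j - i)%N => [//|d IH].
by rewrite addSn (leq_trans IH) // ltnW.
Qed.

Lemma incr_comp f g : incr f -> incr g -> incr (f \o g).
Proof.
move=> hf hg k /=; have := incr_mono hf (hg k).
by move=> h; apply: (leq_trans _ h); apply: hf.
Qed.

Lemma rcvg_sub (a : nat -> R) l f : incr f -> rcvg a l -> rcvg (a \o f) l.
Proof.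
move=> hf H e e0; have [N HN] := H e e0; exists N => k Nk /=.
by apply: HN; apply: leq_trans Nk (incr_ge hf k).
Qed.

Lemma vcvg_sub n (a : nat -> 'rV[R]_n) l f : incr f -> vcvg a l -> vcvg (a \o f) l.
Proof.
move=> hf H e e0; have [N HN] := H e e0; exists N => k Nk /=.
by apply: HN; apply: leq_trans Nk (incr_ge hf k).
Qed.

Lemma BW1 (a : nat -> R) M : (forall k, `|a k| <= M) ->
  exists f l, incr f /\ rcvg (a \o f) l.
Proof.
move=> hM.
have := @bolzano_weierstrass R a; case.
  exists M; split; first exact: num_real.
  by move=> M' HM' k _ /=; apply: le_trans (hM k) (ltW HM').
move=> f hf hl.
exists f, (lim ((a \o f) n @[n --> \oo])); split.
  by move=> k; have := hf k.+1 k; rewrite leEnat => h; rewrite ltnNge h ltnn.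
move=> e e0; have := (cvgrPdist_lt _ _).1 hl e e0.
case=> N _ HN; exists N => k Nk; rewrite distrC; exact: HN.
Qed.

Lemma BWv n (a : nat -> 'rV[R]_n) M : (forall k, enorm (a k) <= M) ->
  exists f l, incr f /\ vcvg (a \o f) l.
Proof.
move=> hM.
have P : forall j, exists f (l : 'rV[R]_n), incr f /\
   forall i : 'I_n, (i < j)%N -> rcvg (fun k => a (f k) 0 i) (l 0 i).
  elim=> [|j [f [l [hf IH]]]].
    by exists id, 0; split => // k.
  have [jn|nj] := ltnP j n; last first.
    exists f, l; split => // i ij; apply: IH.
    by apply: leq_trans (ltn_ord i) nj.
  pose i0 : 'I_n := Ordinal jn.
  have [g [c [hg Hc]]] := @BW1 (fun k => a (f k) 0 i0) M
    (fun k => le_trans (enorm_coord _ _) (hM (f k))).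
  exists (f \o g), (\row_i (if i == i0 then c else l 0 i)); split.
    exact: incr_comp.
  move=> i; rewrite ltnS leq_eqVlt => /orP[/eqP ij|ij].
    have -> : i = i0 by apply: val_inj.
    by rewrite mxE eqxx.
  have ii0 : i != i0 by apply/eqP => h; move: ij; rewrite h /= ltnn.
  rewrite mxE (negbTE ii0).
  by have := rcvg_sub hg (IH i ij).
have [f [l [hf H]]] := P n.
exists f, l; split => // e e0.
set c := e / (Num.sqrt n%:R + 1).
have sq0 : 0 <= Num.sqrt (n%:R : R) by apply: sqrtr_ge0.
have c0 : 0 < c by rewrite divr_gt0 // ltr_pwDr.
have [Nf HNf] := boolp.choice (fun i : 'I_n => H i (ltn_ord i) c c0).
exists (\max_(i < n) Nf i)%N => k Nk.
apply: (@le_lt_trans _ _ (Num.sqrt n%:R * c)).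
  apply: enorm_le_coord; first exact: ltW.
  move=> i; rewrite !mxE; apply: ltW; apply: HNf.
  by apply: leq_trans Nk; apply: (leq_bigmax i).
rewrite /c mulrA ltr_pdivrMr ?ltr_pwDr //; nra.
Qed.

End Cv.
Section Mn.
Variable R : realType.
Implicit Types (n m : nat).

Lemma enormpE n m (a : 'rV[R]_n) (b : 'rV[R]_m) :
  enormp (a, b) = Num.sqrt (enorm a ^+ 2 + enorm b ^+ 2).
Proof. by rewrite /enormp !enorm_sq. Qed.

Lemma enormpN n m (a : 'rV[R]_n) (b : 'rV[R]_m) : enormp (- a, - b) = enormp (a, b).
Proof. by rewrite /enormp /= !dotvNl !dotvNr !opprK. Qed.

Lemma enormp_ge0 n m (a : 'rV[R]_n) (b : 'rV[R]_m) : 0 <= enormp (a, b).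
Proof. exact: sqrtr_ge0. Qed.

Lemma enormp_sq n m (a : 'rV[R]_n) (b : 'rV[R]_m) :
  enormp (a, b) ^+ 2 = enorm a ^+ 2 + enorm b ^+ 2.
Proof. by rewrite enormpE sqr_sqrtr // addr_ge0 // sqr_ge0. Qed.

Lemma enormp_ge1 n m (a : 'rV[R]_n) (b : 'rV[R]_m) : enorm a <= enormp (a, b).
Proof.
rewrite -ler_sqr ?nnegrE ?enorm_ge0 ?enormp_ge0 // enormp_sq lerDl sqr_ge0 //.
Qed.

Lemma enormp_ge2 n m (a : 'rV[R]_n) (b : 'rV[R]_m) : enorm b <= enormp (a, b).
Proof.
rewrite -ler_sqr ?nnegrE ?enorm_ge0 ?enormp_ge0 // enormp_sq lerDr sqr_ge0 //.
Qed.

Lemma enormp_le n m (a : 'rV[R]_n) (b : 'rV[R]_m) : enormp (a, b) <= enorm a + enorm b.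
Proof.
have ha := enorm_ge0 a; have hb := enorm_ge0 b.
rewrite -ler_sqr ?nnegrE ?addr_ge0 ?enormp_ge0 // enormp_sq; nra.
Qed.

Lemma enormpD n m (a1 a2 : 'rV[R]_n) (b1 b2 : 'rV[R]_m) :
  enormp (a1 + a2, b1 + b2) <= enormp (a1, b1) + enormp (a2, b2).
Proof.
have h1 := enormD a1 a2; have h2 := enormD b1 b2.
have p1 := enormp_sq a1 b1; have p2 := enormp_sq a2 b2.
have q1 := enormp_ge0 a1 b1; have q2 := enormp_ge0 a2 b2.
have e1 := enorm_ge0 a1; have e2 := enorm_ge0 a2.
have e3 := enorm_ge0 b1; have e4 := enorm_ge0 b2.
have e5 := enorm_ge0 (a1 + a2); have e6 := enorm_ge0 (b1 + b2).
rewrite -ler_sqr ?nnegrE ?addr_ge0 ?enormp_ge0 // enormp_sq.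
set x1 := enorm a1 in p1 h1 e1 *; set x2 := enorm a2 in p2 h1 e2 *.
set y1 := enorm b1 in p1 h2 e3 *; set y2 := enorm b2 in p2 h2 e4 *.
set P1 := enormp (a1, b1) in p1 q1 *; set P2 := enormp (a2, b2) in p2 q2 *.
have cs : x1 * x2 + y1 * y2 <= P1 * P2.
  have l0 : 0 <= x1 * x2 + y1 * y2 by rewrite addr_ge0 // mulr_ge0.
  rewrite -ler_sqr ?nnegrE ?mulr_ge0 //.
  rewrite exprMn p1 p2.
  have : 0 <= (x1 * y2 - x2 * y1) ^+ 2 by apply: sqr_ge0.
  nra.
nra.
Qed.

Lemma archi_inv (e : R) : 0 < e -> exists N : nat, forall k, (N <= k)%N -> (k.+1%:R)^-1 < e.
Proof.
move=> e0; exists (Num.Def.archi_bound (e^-1)) => k hk.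
have ie : 0 <= e^-1 by rewrite invr_ge0 ltW.
have h := archi_boundP ie.
rewrite -(invrK e) ltf_pV2 ?posrE ?invr_gt0 ?ltr0Sn //.
apply: lt_le_trans h _; rewrite ler_nat; exact: leq_trans hk (leqnSn k).
Qed.

Lemma exists_min n m (G : set ('rV[R]_n * 'rV[R]_m)) (c1 : 'rV[R]_n) (c2 : 'rV[R]_m) r
  (phi : 'rV[R]_n -> 'rV[R]_m -> R) L :
  (forall (zk : nat -> 'rV[R]_n * 'rV[R]_m) z,
      (forall k, G (zk k) /\ enormp ((zk k).1 - c1, (zk k).2 - c2) <= r) ->
      (forall e : R, 0 < e -> exists N : nat, forall k : nat, (N <= k)%N ->
          enormp ((zk k).1 - z.1, (zk k).2 - z.2) < e) ->
      G z) ->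
  forall z0, G z0 -> enormp (z0.1 - c1, z0.2 - c2) <= r ->
  (forall x y, 0 <= phi x y) ->
  0 <= L ->
  (forall x y x' y', enorm (x - c1) <= r -> enorm (x' - c1) <= r ->
     phi x y <= phi x' y' + L * (enorm (x - x') + enorm (y - y'))) ->
  exists z, [/\ G z, enormp (z.1 - c1, z.2 - c2) <= r &
    forall z', G z' -> enormp (z'.1 - c1, z'.2 - c2) <= r -> phi z.1 z.2 <= phi z'.1 z'.2].
Proof.
move=> Gcl z0 Gz0 z0r phi0 L0 Lip.
pose S := [set t | exists z, [/\ G z, enormp (z.1 - c1, z.2 - c2) <= r & t = phi z.1 z.2]].
have Sne : S !=set0 by exists (phi z0.1 z0.2), z0.
have Slb : has_lbound S by exists 0 => t [z [_ _ ->]].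
have Sinf : has_inf S by [].
have hz : forall j : nat, exists z, [/\ G z, enormp (z.1 - c1, z.2 - c2) <= r &
    phi z.1 z.2 < inf S + (j.+1%:R)^-1].
  move=> j; have jp : 0 < (j.+1%:R : R)^-1 by rewrite invr_gt0 ltr0Sn.
  have [t [z [Gz zr ->]] ht] := inf_adherent jp Sinf.
  by exists z.
have [zs Hzs] := boolp.choice hz.
have b1 : forall k, enorm ((zs k).1) <= r + enorm c1.
  move=> k; have [_ hr _] := Hzs k.
  have := enormD ((zs k).1 - c1) c1; rewrite subrK => h.
  apply: le_trans h _; rewrite lerD2r; apply: le_trans (enormp_ge1 _ _) hr.
have b2 : forall k, enorm ((zs k).2) <= r + enorm c2.
  move=> k; have [_ hr _] := Hzs k.
  have := enormD ((zs k).2 - c2) c2; rewrite subrK => h.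
  apply: le_trans h _; rewrite lerD2r; apply: le_trans (enormp_ge2 _ _) hr.
have [f1 [l1 [hf1 cv1]]] := BWv b1.
have [f2 [l2 [hf2 cv2]]] := BWv (fun k => b2 (f1 k)).
set s := f1 \o f2.
have hs : incr s by apply: incr_comp.
have cv1' : vcvg (fun k => (zs (s k)).1) l1 by have := vcvg_sub hf2 cv1.
have cv2' : vcvg (fun k => (zs (s k)).2) l2 by [].
have cvp : forall e : R, 0 < e -> exists N : nat, forall k : nat, (N <= k)%N ->
          enormp ((zs (s k)).1 - l1, (zs (s k)).2 - l2) < e.
  move=> e e0; have e20 : 0 < e / 2 by rewrite divr_gt0.
  have [N1 H1] := cv1' _ e20; have [N2 H2] := cv2' _ e20.
  exists (maxn N1 N2) => k; rewrite geq_max => /andP[k1 k2].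
  apply: le_lt_trans (enormp_le _ _) _.
  have := H1 k k1; have := H2 k k2; lra.
have Gl : G (l1, l2).
  apply: (Gcl (zs \o s)) => // k /=; have [? ? _] := Hzs (s k); by split.
have lr : enormp (l1 - c1, l2 - c2) <= r.
  apply/ler_addgt0Pr => e e0; have [N HN] := cvp e e0.
  have := enormpD (l1 - (zs (s N)).1) ((zs (s N)).1 - c1)
                  (l2 - (zs (s N)).2) ((zs (s N)).2 - c2).
  rewrite !addrA !subrK => h; apply: le_trans h _.
  have [_ hr _] := Hzs (s N).
  have h2 := HN N (leqnn N); rewrite -enormpN !opprB in h2.
  rewrite addrC; apply: lerD => //; exact: ltW.
exists (l1, l2); split => // z' Gz' z'r /=.
have infle : inf S <= phi z'.1 z'.2 by apply: ge_inf => //; exists z'.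
apply/ler_addgt0Pr => e e0.
have e20 : 0 < e / 2 by rewrite divr_gt0.
have eL : 0 < e / 4 / (L + 1) by rewrite !divr_gt0 // ltr_wpDl.
have [N1 H1] := archi_inv e20.
have [N2 H2] := cvp _ eL.
set k := maxn N1 N2.
have [_ hr hphi] := Hzs (s k).
have Hk1 := H1 (s k) (leq_trans (leq_maxl N1 N2) (incr_ge hs k)).
have Hk2 := H2 k (leq_maxr N1 N2).
have l1r : enorm (l1 - c1) <= r by apply: le_trans (enormp_ge1 _ _) lr.
have zr : enorm ((zs (s k)).1 - c1) <= r by apply: le_trans (enormp_ge1 _ _) hr.
have := Lip l1 l2 (zs (s k)).1 (zs (s k)).2 l1r zr.
rewrite (enormB l1) (enormB l2) => hL.
have hn : enorm ((zs (s k)).1 - l1) + enorm ((zs (s k)).2 - l2) <=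
          Num.sqrt 2 * enormp ((zs (s k)).1 - l1, (zs (s k)).2 - l2).
  set a := enorm _; set b := enorm _.
  have ha : 0 <= a by apply: enorm_ge0.
  have hb : 0 <= b by apply: enorm_ge0.
  rewrite -(ger0_norm (enormp_ge0 _ _)) -sqrtr_sqr -sqrtrM // enormp_sq.
  rewrite -(ger0_norm (addr_ge0 ha hb)) -sqrtr_sqr; apply: ler_wsqrtr; rewrite -/a -/b.
  have := sqr_ge0 (a - b); rewrite !expr2; nra.
have sq2 : Num.sqrt (2 : R) <= 2.
  rewrite -(ger0_norm (ler0n R 2)) -[X in _ <= X]sqrtr_sqr ler_wsqrtr //.
  rewrite normr_nat; lra.
set q := e / 4 / (L + 1) in eL Hk2.
have hq : L * q <= e / 4.
  have L1 : L + 1 != 0 by rewrite gt_eqF // ltr_wpDl.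
  have -> : e / 4 = (L + 1) * q by rewrite /q; field.
  rewrite ler_wpM2r ?ltW //; lra.
have hP : enorm ((zs (s k)).1 - l1) + enorm ((zs (s k)).2 - l2) <= 2 * q.
  apply: le_trans hn _; have := enormp_ge0 ((zs (s k)).1 - l1) ((zs (s k)).2 - l2).
  have := sqrtr_ge0 (2 : R); nra.
have hLP : L * (enorm ((zs (s k)).1 - l1) + enorm ((zs (s k)).2 - l2)) <= L * (2 * q).
  by rewrite ler_wpM2l.
rewrite mulrCA in hLP. clearbody q.
have h2 : (s k).+1%:R^-1 + 2 * (L * q) <= e / 2 + 2 * (e / 4).
  by apply: lerD; [apply: ltW|rewrite ler_pM2l].
have h3 : e / 2 + 2 * (e / 4) = e by field.
rewrite h3 in h2.
apply: (le_trans hL); apply: (le_trans (lerD (ltW hphi) hLP)).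
rewrite -addrA; exact: lerD.
Qed.

End Mn.
Section Key.
Variable R : realType.
Variables (n m : nat) (Phi : 'rV[R]_n -> set 'rV[R]_m) (xb : 'rV[R]_n) (yb : 'rV[R]_m).
Variables (u : 'rV[R]_n) (gamma r : R).
Hypothesis Hgam : 1 <= gamma.
Hypothesis Hr : 0 < r.
Hypothesis Gcl : forall (zk : nat -> 'rV[R]_n * 'rV[R]_m) (z : 'rV[R]_n * 'rV[R]_m),
      (forall k, gph Phi (zk k) /\ enormp ((zk k).1 - xb, (zk k).2 - yb) <= r) ->
      (forall e : R, 0 < e -> exists N : nat, forall k : nat, (N <= k)%N ->
          enormp ((zk k).1 - z.1, (zk k).2 - z.2) < e) ->
      gph Phi z.
Hypothesis Hu : enorm u = 1.

Lemma normdiff p (c g : 'rV[R]_p) : c != 0 ->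
  enorm (c + g) - enorm c <= dotv c g / enorm c + 2 * enorm g ^+ 2 / enorm c.
Proof.
move=> c0; have N0 := enorm_gt0 c0.
set N := enorm c in N0 *; set A := enorm (c + g); set G := enorm g; set C := dotv c g.
have hA : A ^+ 2 = N ^+ 2 + 2 * C + G ^+ 2.
  rewrite /A /N /G /C !enorm_sq dotvDl !dotvDr (dotvC g c); ring.
rewrite -mulrDl ler_pdivlMr //.
have := sqr_ge0 (A - N); have := sqr_ge0 G; nra.
Qed.

Lemma pw_le1 (t : R) : 0 <= t -> t <= 1 -> t `^ (gamma - 1) <= 1.
Proof.
move=> t0 t1; have g0 : 0 <= gamma - 1 by rewrite subr_ge0.
have := @ge0_ler_powR R (gamma - 1) g0 t 1; rewrite powR1 => -> //; by rewrite nnegrE.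
Qed.

Lemma pw_mono (t t' : R) : 0 <= t -> t <= t' -> t `^ (gamma - 1) <= t' `^ (gamma - 1).
Proof.
move=> t0 tt; have g0 : 0 <= gamma - 1 by rewrite subr_ge0.
apply: (@ge0_ler_powR R (gamma - 1) g0) => //; rewrite nnegrE //; exact: le_trans tt.
Qed.

Definition Cst := 4 * 2 `^ (gamma - 1).

Lemma div_helper (N k A B : R) : 0 < k -> 0 < B -> N * k <= A * B -> B^-1 * N <= A / k.
Proof. by move=> k0 B0 h; rewrite mulrC ler_pdivrMr // mulrAC ler_pdivlMr. Qed.

Lemma key (k : nat) (x : 'rV[R]_n) (y : 'rV[R]_m) (D : R) :
  let kk := (k.+2)%:R : R in
  let tau := enorm (x - xb) in
  0 < tau -> tau <= 1 -> 8 * tau <= r -> kk * tau <= 1 ->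
  enorm (tau *: u - (x - xb)) <= tau / kk ->
  0 < D -> D <= tau -> (forall x', Phi x' yb -> D <= enorm (x - x')) ->
  Phi x y -> kk ^+ 3 * enorm (yb - y) < tau `^ (gamma - 1) * D ->
  exists (xt : 'rV[R]_n) (yt : 'rV[R]_m) (xs : 'rV[R]_n) (b : 'rV[R]_m),
  [/\ 0 < enorm (xt - xb), enorm (xt - xb) <= 2 / kk,
      enorm ((enorm (xt - xb))^-1 *: (xt - xb) - u) <= 3 / kk,
      enorm (((enorm (xt - xb)) `^ gamma)^-1 *: (yt - yb)) <= Cst / kk &
      [/\ enorm xs <= Cst / kk, enorm b = 1 &
      reg_normal (gph Phi) (xt, yt) (xs, - ((enorm (xt - xb)) `^ (gamma - 1))^-1 *: b)]].
Proof.
move=> kk tau t0 t1 t8 tk tdir D0 Dt DH Pxy Hfail.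
set eta := enorm (yb - y) in Hfail.
have kk2 : 2 <= kk by rewrite /kk (ler_nat R 2).
have kk0 : 0 < kk by lra.
clearbody kk.
have K1 : kk <= kk ^+ 3.
  rewrite !exprS expr0 mulr1; nra.
have eta0 : 0 <= eta by apply: enorm_ge0.
set pw := tau `^ (gamma - 1) in Hfail.
have pw0 : 0 < pw by apply: powR_gt0.
have pw1 : pw <= 1 by apply: pw_le1; lra.
have etaT : eta <= tau.
  have : pw * D <= D by rewrite ler_piMl // ltW.
  have : eta <= kk ^+ 3 * eta by rewrite ler_peMl //; lra.
  lra.
have etap : 0 < eta.
  rewrite /eta enorm_gt0 // subr_eq0; apply/eqP => hy.
  have := DH x; rewrite hy subrr enorm0 => /(_ Pxy); lra.
set beta := 2 * kk ^+ 2 * eta / D ^+ 2.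
have beta0 : 0 < beta by rewrite /beta !mulr_gt0 ?invr_gt0 ?exprn_gt0.
have betaD : beta * D ^+ 2 = 2 * kk ^+ 2 * eta by rewrite /beta divfK // expf_neq0 // gt_eqF.
pose phi (x' : 'rV[R]_n) (y' : 'rV[R]_m) := enorm (y' - yb) + beta * enorm (x' - x) ^+ 2.
pose L := 1 + beta * (2 * (r + tau)).
have Lip : forall x1 y1 x2 y2, enorm (x1 - xb) <= r -> enorm (x2 - xb) <= r ->
     phi x1 y1 <= phi x2 y2 + L * (enorm (x1 - x2) + enorm (y1 - y2)).
  move=> x1 y1 x2 y2 h1 h2; rewrite /phi /L.
  have a1r : enorm (x1 - x) <= r + tau.
    by apply: le_trans (enormDB x1 xb x) _; apply: lerD => //; rewrite enormB.
  have a2r : enorm (x2 - x) <= r + tau.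
    by apply: le_trans (enormDB x2 xb x) _; apply: lerD => //; rewrite enormB.
  have a12 := enormDB x1 x2 x.
  have n12 := enormDB y1 y2 yb.
  have hd := enorm_ge0 (x1 - x2); have he := enorm_ge0 (y1 - y2).
  have ha1 := enorm_ge0 (x1 - x); have ha2 := enorm_ge0 (x2 - x).
  set d := enorm (x1 - x2) in a12 hd *; set a1 := enorm (x1 - x) in a1r a12 ha1 *.
  set a2 := enorm (x2 - x) in a2r a12 ha2 *.
  have sq : a1 ^+ 2 <= a2 ^+ 2 + 2 * (r + tau) * d by nra.
  have := ler_wpM2l (ltW beta0) sq; rewrite mulrDr.
  set e' := enorm (y1 - y2) in n12 he *.
  have : beta * (2 * (r + tau) * d) <= beta * (2 * (r + tau)) * (d + e').
    have rt : 0 <= 2 * (r + tau) by lra.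
    have := mulr_ge0 (mulr_ge0 (ltW beta0) rt) he; nra.
  have : enorm (y1 - yb) <= enorm (y2 - yb) + (d + e') * 1.
    rewrite mulr1; lra.
  move=> *; rewrite mulrDl mul1r; lra.
have L0 : 0 <= L by rewrite /L addr_ge0 // mulr_ge0 // ?ltW //; lra.
have phi0 : forall x' y', 0 <= phi x' y'.
  move=> x' y'; rewrite /phi; apply: addr_ge0; first exact: enorm_ge0.
  by apply: mulr_ge0; [apply: ltW | apply: sqr_ge0].
have z0r : enormp ((x, y).1 - xb, (x, y).2 - yb) <= r.
  apply: le_trans (enormp_le _ _) _; rewrite /= (enormB y) -/eta -/tau; lra.
have [[xt yt] [Gz zr zmin]] := exists_min Gcl (z0 := (x, y)) Pxy z0r phi0 L0 Lip.
simpl in zr, zmin.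
have phiz : phi xt yt <= eta.
  have := zmin (x, y) Pxy z0r; rewrite /phi /= subrr enorm0 expr0n mulr0 addr0.
  by rewrite (enormB y).
have hN : enorm (yt - yb) <= eta.
  move: phiz; rewrite /phi; have := mulr_ge0 (ltW beta0) (sqr_ge0 (enorm (xt - x))); lra.
have ht : beta * enorm (xt - x) ^+ 2 <= eta.
  move: phiz; rewrite /phi; have := enorm_ge0 (yt - yb); lra.
have ytn : yt - yb != 0.
  rewrite subr_eq0; apply/eqP => hy; rewrite hy in Gz.
  have := DH xt Gz; rewrite enormB => hD.
  have : beta * D ^+ 2 <= beta * enorm (xt - x) ^+ 2.
    apply: ler_wpM2l; first exact: ltW.
    by rewrite ler_sqr ?nnegrE ?enorm_ge0 ?(ltW D0).
  rewrite betaD; have : eta < 2 * kk ^+ 2 * eta.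
    rewrite -[X in X < _]mul1r ltr_pM2r //; rewrite !exprS expr0 mulr1; nra.
  lra.
set a := enorm (xt - x) in ht.
have a0 : 0 <= a by apply: enorm_ge0.
have akD : a * kk <= D.
  have h1 : (a * kk) ^+ 2 <= D ^+ 2.
    have : beta * a ^+ 2 * D ^+ 2 <= eta * D ^+ 2 by rewrite ler_wpM2r // sqr_ge0.
    rewrite mulrAC betaD => h.
    have : eta * (2 * (a * kk) ^+ 2) <= eta * D ^+ 2.
      apply: le_trans h; rewrite le_eqVlt; apply/orP; left; apply/eqP; ring.
    rewrite ler_pM2l // => h2; have := sqr_ge0 (a * kk); lra.
  by rewrite -ler_sqr ?nnegrE ?mulr_ge0 ?(ltW kk0) ?(ltW D0).
have atau : a <= tau / kk by rewrite ler_pdivlMr //; lra.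
set T := enorm (xt - xb).
have Tup : T <= 2 * tau.
  have := enormDB xt x xb; rewrite -/a -/T -/tau.
  have : tau / kk <= tau by rewrite ler_pdivrMr //; nra.
  lra.
have Tlo : tau / 2 <= T.
  have := enormDB x xt xb; rewrite -/T -/tau enormB -/a.
  have : tau / kk <= tau / 2 by rewrite ler_pM2l // lef_pV2 ?posrE //; lra.
  lra.
have T0 : 0 < T by lra.
set s := T `^ (gamma - 1).
have s0 : 0 < s by apply: powR_gt0.
set c2 := 2 `^ (gamma - 1) : R.
have c20 : 0 < c2 by apply: powR_gt0.
have pws : pw <= c2 * s.
  rewrite /pw /c2 /s -powRM //; last exact: ltW.
  apply: pw_mono; [exact: ltW | lra].
have g0 : 0 < gamma by apply: lt_le_trans Hgam.
have Tg : T `^ gamma = T * s by rewrite /s mulr_powRB1 // ltW.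
exists xt, yt, (- (2 * beta / s) *: (xt - x)), ((enorm (yt - yb))^-1 *: (yt - yb)).
rewrite -/T -/s Tg.
split => //.
- rewrite ler_pdivlMr //; have := ler_wpM2r (ltW kk0) Tup; nra.
- have tn : tau != 0 by apply: lt0r_neq0.
  have Tn : T != 0 by apply: lt0r_neq0.
  have -> : T^-1 *: (xt - xb) - u = (T^-1 - tau^-1) *: (xt - xb) + tau^-1 *: (xt - x)
        - tau^-1 *: (tau *: u - (x - xb)).
    by apply/rowP => i; rewrite !mxE; field; rewrite tn Tn.
  have hA : enorm ((T^-1 - tau^-1) *: (xt - xb)) <= kk^-1.
    rewrite enormZ -/T.
    have -> : `|T^-1 - tau^-1| * T = `|tau - T| / tau.
      have -> : T^-1 - tau^-1 = (tau - T) / tau * T^-1 by field; rewrite tn Tn.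
      have itau : 0 <= tau^-1 by rewrite invr_ge0 ltW.
      have iT : 0 <= T^-1 by rewrite invr_ge0 ltW.
      rewrite normrM normrM (ger0_norm itau) (ger0_norm iT).
      by rewrite mulfVK.
    rewrite ler_pdivrMr //.
    have h1 := enormDB xt x xb; have h2 := enormDB x xt xb.
    rewrite -/T -/tau -/a in h1; rewrite -/T -/tau enormB -/a in h2.
    have : `|tau - T| <= a by rewrite ler_norml; apply/andP; split; lra.
    move=> h3; apply: le_trans h3 _; rewrite mulrC -[X in _ <= X]/(tau / kk); exact: atau.
  have hB : enorm (tau^-1 *: (xt - x)) <= kk^-1.
    rewrite enormZ -/a ger0_norm ?invr_ge0 ?(ltW t0) // mulrC ler_pdivrMr // mulrC; exact: atau.
  have hC : enorm (tau^-1 *: (tau *: u - (x - xb))) <= kk^-1.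
    rewrite enormZ ger0_norm ?invr_ge0 ?(ltW t0) // mulrC ler_pdivrMr // mulrC; exact: tdir.
  apply: le_trans (enormD _ _) _; rewrite enormN.
  apply: le_trans (lerD (enormD _ _) (lexx _)) _.
  have -> : 3 / kk = kk^-1 + kk^-1 + kk^-1 by field; apply: lt0r_neq0.
  by apply: lerD => //; apply: lerD.
- have Ts0 : 0 < T * s by apply: mulr_gt0.
  rewrite enormZ ger0_norm ?invr_ge0 ?(ltW Ts0) //.
  apply: div_helper => //.
  set N := enorm (yt - yb) in hN *.
  have f1 : pw * D <= c2 * s * D by apply: ler_wpM2r; [exact: ltW | exact: pws].
  have cs0 : 0 <= c2 * s by apply: mulr_ge0; apply: ltW.
  have f2 : c2 * s * D <= c2 * s * tau by apply: ler_wpM2l.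
  have f3 : c2 * s * tau <= c2 * s * (2 * T) by apply: ler_wpM2l => //; lra.
  have f4 : kk * eta <= kk ^+ 3 * eta by apply: ler_wpM2r.
  have f5 : N * kk <= eta * kk by apply: ler_wpM2r => //; exact: ltW.
  have f6 : 0 <= c2 * s * T by apply: mulr_ge0 => //; exact: ltW.
  rewrite /Cst -/c2; lra.
split.
- rewrite enormZ normrN -/a ger0_norm; last first.
    by apply: divr_ge0; [apply: mulr_ge0; [lra | exact: ltW] | exact: ltW].
  have -> : 2 * beta / s * a = s^-1 * (2 * beta * a) by rewrite mulrAC mulrC.
  apply: div_helper => //.
  have p2 : (a * kk) * (2 * beta * D * kk) <= D * (2 * beta * D * kk).
    apply: ler_wpM2r => //; apply: mulr_ge0; last exact: ltW.
    apply: mulr_ge0; [apply: mulr_ge0; [lra | exact: ltW] | exact: ltW].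
  have bk : kk * (beta * D ^+ 2) = kk * (2 * kk ^+ 2 * eta) by rewrite betaD.
  have f1 : pw * D <= c2 * s * D by apply: ler_wpM2r; [exact: ltW | exact: pws].
  have g : (2 * beta * a * kk * kk) * D <= (4 * c2 * s) * D.
    have : D * (2 * beta * D * kk) = 2 * (kk * (beta * D ^+ 2)) by ring.
    nra.
  have g' : 2 * beta * a * kk * kk <= 4 * c2 * s by rewrite -(ler_pM2r D0).
  have g2 : 2 * beta * a * kk <= 2 * beta * a * kk * kk.
    rewrite -{1}(mulr1 (2 * beta * a * kk)); apply: ler_wpM2l; last lra.
    apply: mulr_ge0; [apply: mulr_ge0; [apply: mulr_ge0; [lra | exact: ltW] | exact: a0] | exact: ltW].
  rewrite /Cst -/c2; lra.
- rewrite enormZ ger0_norm ?invr_ge0 ?enorm_ge0 // mulVf //.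
  by apply: lt0r_neq0; apply: enorm_gt0.
split; first exact: Gz.
move=> e e0.
set N := enorm (yt - yb) in hN *.
have N0 : 0 < N by apply: enorm_gt0.
set M := beta + 2 / N.
have M0 : 0 < M by rewrite /M addr_gt0 // divr_gt0.
exists (Num.min (r / 2) (e * s / M)); split.
  by rewrite lt_min; apply/andP; split; [rewrite divr_gt0 | rewrite !mulr_gt0 ?invr_gt0].
move=> [x' y'] Gz' /=; rewrite lt_min => /andP[hd1 hd2].
have inC : enormp (x' - xb, y' - yb) <= r.
  have := enormpD (x' - xt) (xt - xb) (y' - yt) (yt - yb).
  have -> : x' - xt + (xt - xb) = x' - xb by apply/rowP => i; rewrite !mxE; ring.
  have -> : y' - yt + (yt - yb) = y' - yb by apply/rowP => i; rewrite !mxE; ring.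
  move=> H.
  apply: le_trans H _; apply: le_trans (lerD (lexx _) (enormp_le _ _)) _.
  rewrite -/T -/N; lra.
set h := x' - xt; set g := y' - yt.
set P := enormp (h, g) in hd1 hd2 *.
have hmin := zmin (x', y') Gz' inC; rewrite /phi /= -/N -/a in hmin.
have ey : y' - yb = (yt - yb) + g by apply/rowP => i; rewrite /g !mxE; ring.
have ex : x' - x = (xt - x) + h by apply/rowP => i; rewrite /h !mxE; ring.
rewrite ey ex in hmin.
have nd := normdiff g ytn; rewrite -/N in nd.
have sq : enorm ((xt - x) + h) ^+ 2 = a ^+ 2 + 2 * dotv (xt - x) h + enorm h ^+ 2.
  by rewrite enorm_sqD.
rewrite sq in hmin.
have P2 : P ^+ 2 = enorm h ^+ 2 + enorm g ^+ 2 by rewrite /P enormp_sq.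
rewrite /dotp /= !dotvZl.
set dv := dotv (xt - x) h; set C := dotv (yt - yb) g.
set Q := - (2 * beta * dv + C / N).
have -> : - (2 * beta / s) * dv + - s^-1 * (N^-1 * C) = Q / s by rewrite /Q; ring.
have f1 : 0 <= beta * enorm g ^+ 2 by apply: mulr_ge0; [exact: ltW | exact: sqr_ge0].
have f2 : 0 <= 2 / N * enorm h ^+ 2 by apply: mulr_ge0; [apply: divr_ge0; [lra | exact: ltW] | exact: sqr_ge0].
have hQ : Q <= M * P ^+ 2.
  rewrite -/dv in hmin; rewrite -/C in nd; rewrite P2 /M /Q; lra.
have P0 : 0 <= P by apply: enormp_ge0.
have Pd : P <= e * s / M by apply: ltW.
have hMP : M * P ^+ 2 <= e * s * P.
  have : M * P * P <= M * P * (e * s / M).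
    by apply: ler_wpM2l => //; apply: mulr_ge0 => //; exact: ltW.
  have -> : M * P * (e * s / M) = e * s * P by field; apply: lt0r_neq0.
  by rewrite expr2 mulrA.
rewrite ler_pdivrMr //; rewrite -/h -/g -/P.
have : Q <= e * s * P by apply: le_trans hQ hMP.
move=> h1; apply: le_trans h1 _; rewrite le_eqVlt; apply/orP; left; apply/eqP; ring.
Qed.

End Key.
Section Fin.
Variable R : realType.

Lemma vcvg_bound n (a : nat -> 'rV[R]_n) l c : 0 <= c ->
  (forall k, enorm (a k - l) <= c / (k.+2)%:R) -> vcvg a l.
Proof.
move=> c0 H e e0.
have ec : 0 < e / (c + 1) by rewrite divr_gt0 // ltr_wpDl.
have [N HN] := archi_inv ec; exists N => k hk.
apply: le_lt_trans (H k) _.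
have h1 : c / k.+2%:R <= (c + 1) * (k.+1%:R)^-1.
  apply: ler_pM; [exact: c0 | by rewrite invr_ge0 | lra |].
  by rewrite lef_pV2 ?posrE ?ltr0Sn // ler_nat.
apply: le_lt_trans h1 _.
have := HN k hk; rewrite ltr_pdivlMr ?ltr_wpDl // => h2.
by rewrite mulrC.
Qed.

Lemma rcvg_bound (a : nat -> R) c : 0 <= c ->
  (forall k, 0 <= a k /\ a k <= c / (k.+2)%:R) -> rcvg a 0.
Proof.
move=> c0 H e e0.
have ec : 0 < e / (c + 1) by rewrite divr_gt0 // ltr_wpDl.
have [N HN] := archi_inv ec; exists N => k hk.
have [a0 ha] := H k; rewrite subr0 ger0_norm //.
apply: le_lt_trans ha _.
have h1 : c / k.+2%:R <= (c + 1) * (k.+1%:R)^-1.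
  apply: ler_pM; [exact: c0 | by rewrite invr_ge0 | lra |].
  by rewrite lef_pV2 ?posrE ?ltr0Sn // ler_nat.
apply: le_lt_trans h1 _.
have := HN k hk; rewrite ltr_pdivlMr ?ltr_wpDl // => h2.
by rewrite mulrC.
Qed.

Lemma vcvg_norm1 p (b : nat -> 'rV[R]_p) l : (forall k, enorm (b k) = 1) -> vcvg b l -> l != 0.
Proof.
move=> hb cv; apply/eqP => l0.
have [N HN] := cv 1 ltr01.
by have := HN N (leqnn N); rewrite l0 subr0 hb ltxx.
Qed.

End Fin.
Theorem lemma2p16 (R : realType) (n m : nat) (Phi : 'rV[R]_n -> set 'rV[R]_m)
  (xb : 'rV[R]_n) (yb : 'rV[R]_m) (u : 'rV[R]_n) (gamma : R) :
  Phi xb yb ->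
  gph_locally_closed Phi xb yb ->
  enorm u = 1 ->
  1 <= gamma ->
  kerM (pseudo_coderiv Phi gamma xb yb u 0) `<=` [set 0] ->
  metric_pseudo_subreg Phi gamma xb yb u.
Proof.
move=> Pxb [r [Hr Gcl]] Hu Hgam Hker.
case: (pselect (metric_pseudo_subreg Phi gamma xb yb u)) => // Hnot; exfalso.
have g1 : 0 <= gamma - 1 by rewrite subr_ge0.
have main : forall k : nat, exists p : 'rV[R]_n * 'rV[R]_m * 'rV[R]_n * 'rV[R]_m,
  let: (xt, yt, xs, b) := p in let kk := (k.+2)%:R : R in
  [/\ 0 < enorm (xt - xb), enorm (xt - xb) <= 2 / kk,
      enorm ((enorm (xt - xb))^-1 *: (xt - xb) - u) <= 3 / kk,
      enorm (((enorm (xt - xb)) `^ gamma)^-1 *: (yt - yb)) <= Cst gamma / kk &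
      [/\ enorm xs <= Cst gamma / kk, enorm b = 1 &
      reg_normal (gph Phi) (xt, yt) (xs, - ((enorm (xt - xb)) `^ (gamma - 1))^-1 *: b)]].
  move=> k.
  set kk := (k.+2)%:R : R.
  have kk2 : 2 <= kk by rewrite /kk (ler_nat R 2).
  have kk0 : 0 < kk by lra.
  set rho := Num.min 1 (r / 8).
  have rho0 : 0 < rho by rewrite lt_min ltr01 divr_gt0.
  have rho1 : rho <= 1 by rewrite ge_min lexx.
  have rho8 : rho <= r / 8 by rewrite ge_min lexx orbT.
  set eps := rho / kk.
  have eps0 : 0 < eps by rewrite divr_gt0.
  have del0 : 0 < kk^-1 by rewrite invr_gt0.
  have kap0 : 0 < kk ^+ 3 by rewrite exprn_gt0.
  have [x [hdir hfail]] : exists x : 'rV[R]_n, dir_ball eps (kk^-1) u (x - xb) /\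
     ~ (((enorm (x - xb) `^ (gamma - 1))%R)%:E * Defs.edist x [set x' | Phi x' yb] <=
        ((kk ^+ 3)%R)%:E * Defs.edist yb (Phi x))%E.
    case: (pselect (exists x : 'rV[R]_n, dir_ball eps (kk^-1) u (x - xb) /\
     ~ (((enorm (x - xb) `^ (gamma - 1))%R)%:E * Defs.edist x [set x' | Phi x' yb] <=
        ((kk ^+ 3)%R)%:E * Defs.edist yb (Phi x))%E)) => // H.
    exfalso; apply: Hnot; exists eps, kk^-1, (kk ^+ 3); split => // x hx.
    case: (boolP (((enorm (x - xb) `^ (gamma - 1))%R)%:E * Defs.edist x [set x' | Phi x' yb] <=
        ((kk ^+ 3)%R)%:E * Defs.edist yb (Phi x))%E) => // hb.
    by exfalso; apply: H; exists x; split => //; apply/negP.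
  case: hdir; rewrite Hu scale1r mulr1 => tdir teps.
  set tau := enorm (x - xb) in tdir teps hfail.
  have t0' : 0 <= tau by apply: enorm_ge0.
  set dd := Defs.edist x [set x' | Phi x' yb] in hfail.
  have ddub : (dd <= tau%:E)%E.
    by apply: ge_ereal_inf; exists tau%:E => //; exists xb.
  have ddlb : forall x', Phi x' yb -> (dd <= (enorm (x - x'))%:E)%E.
    by move=> x' hx'; apply: ge_ereal_inf; exists (enorm (x - x'))%:E => //; exists x'.
  have dd0 : (0 <= dd)%E.
    by apply/ereal_infP => _ [x' _ <-]; rewrite lee_fin enorm_ge0.
  move: ddub ddlb dd0 hfail; case: dd => [D| |] //= ddub ddlb dd0 hfail.
  rewrite lee_fin in ddub.
  have {}dd0 : 0 <= D by move: dd0; rewrite -[0%E]/(0%:E) lee_fin.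
  have DH : forall x', Phi x' yb -> D <= enorm (x - x').
    by move=> x' /ddlb; rewrite lee_fin.
  set pw := tau `^ (gamma - 1) in hfail.
  have pw0 : 0 <= pw by apply: powR_ge0.
  have [y Pxy Hy] : exists2 y, Phi x y & kk ^+ 3 * enorm (yb - y) < pw * D.
    case: (pselect (exists2 y, Phi x y & kk ^+ 3 * enorm (yb - y) < pw * D)) => // H.
    exfalso; apply: hfail.
    have lb : ((pw * D / kk ^+ 3)%:E <= Defs.edist yb (Phi x))%E.
      apply/ereal_infP => _ [y hy <-]; rewrite lee_fin ler_pdivrMr //.
      rewrite leNgt; apply/negP => hlt; apply: H; exists y => //; by rewrite mulrC.
    rewrite -EFinM; move: lb; case: (Defs.edist yb (Phi x)) => [e'| |] //=.
      by rewrite !lee_fin ler_pdivrMr // [kk ^+ 3 * _]mulrC.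
    move=> _; rewrite mulry gtr0_sg // mul1e; exact: leey.
  have Dp : 0 < D.
    rewrite lt_neqAle dd0 andbT; apply/eqP => D0; move: Hy; rewrite -D0 mulr0.
    by apply/negP; rewrite -leNgt mulr_ge0 ?enorm_ge0 // ltW.
  have t0 : 0 < tau by apply: lt_le_trans Dp ddub.
  have t1 : tau <= 1.
    apply: le_trans teps _; rewrite /eps ler_pdivrMr //; nra.
  have t8 : 8 * tau <= r.
    have : tau <= r / 8.
      apply: le_trans teps _; rewrite /eps ler_pdivrMr //; nra.
    lra.
  have tk : kk * tau <= 1.
    have : tau <= kk^-1.
      apply: le_trans teps _; rewrite /eps ler_pdivrMr // mulVf //; exact: lt0r_neq0.
    by rewrite mulrC -ler_pdivlMr // mul1r.
  have tdir' : enorm (tau *: u - (x - xb)) <= tau / kk by rewrite mulrC.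
  have := @key R n m Phi xb yb u gamma r Hgam Hr Gcl k x y D t0 t1 t8 tk tdir' Dp ddub DH Pxy Hy.
  move=> [xt [yt [xs [b H]]]].
  by exists (xt, yt, xs, b).
case: (boolp.choice main) => F HF.
pose xt k := (F k).1.1.1; pose yt k := (F k).1.1.2.
pose xs k := (F k).1.2; pose b k := (F k).2.
pose T k := enorm (xt k - xb).
have HF' : forall k, let kk := (k.+2)%:R : R in
  [/\ 0 < T k, T k <= 2 / kk,
      enorm ((T k)^-1 *: (xt k - xb) - u) <= 3 / kk,
      enorm (((T k) `^ gamma)^-1 *: (yt k - yb)) <= Cst gamma / kk &
      [/\ enorm (xs k) <= Cst gamma / kk, enorm (b k) = 1 &
      reg_normal (gph Phi) (xt k, yt k) (xs k, - ((T k) `^ (gamma - 1))^-1 *: b k)]].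
  move=> k; have := HF k; rewrite /T /xt /yt /xs /b.
  by case: (F k) => [[[a1 a2] a3] a4].
pose uk k := (T k)^-1 *: (xt k - xb).
pose vk k := ((T k) `^ gamma)^-1 *: (yt k - yb).
have Cst0 : 0 <= Cst gamma by rewrite /Cst mulr_ge0 // powR_ge0.
have hb : forall k, enorm (b k) <= 1.
  by move=> k; have [_ _ _ _ [_ -> _]] := HF' k.
have [f [l [hf cvb]]] := BWv hb.
have ln0 : l != 0.
  by apply: (vcvg_norm1 (b := b \o f)) => // k /=; have [_ _ _ _ [_ -> _]] := HF' (f k).
apply: (negP ln0); apply/eqP; apply: Hker.
exists (uk \o f), (vk \o f), (T \o f), (xs \o f), (b \o f).
split.
- split.
  + apply: vcvg_sub => //; apply: (@vcvg_bound _ _ _ _ 3) => // k.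
    by have [_ _ h _ _] := HF' k.
  + apply: vcvg_sub => //; apply: (@vcvg_bound _ _ _ _ (Cst gamma)) => // k.
    by rewrite subr0; have [_ _ _ h _] := HF' k.
- split.
  + by move=> k /=; have [h _ _ _ _] := HF' (f k).
  + apply: rcvg_sub => //; apply: (@rcvg_bound _ _ 2) => // k.
    by have [h1 h2 _ _ _] := HF' k; split => //; apply: ltW.
- apply: vcvg_sub => //; apply: (@vcvg_bound _ _ _ _ (Cst gamma)) => // k.
  by rewrite subr0; have [_ _ _ _ [h _ _]] := HF' k.
- exact: cvb.
move=> k /=.
have [T0 _ _ _ [_ _ hN]] := HF' (f k).
have Tn : T (f k) != 0 by apply: lt0r_neq0.
have Tgn : T (f k) `^ gamma != 0 by apply: lt0r_neq0; apply: powR_gt0.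
have eu : enorm (uk (f k)) = 1.
  rewrite /uk enormZ -/(T (f k)) ger0_norm ?invr_ge0 ?(ltW T0) // mulVf //.
rewrite eu mulr1.
have -> : xb + T (f k) *: uk (f k) = xt (f k).
  by rewrite /uk scalerA divff // scale1r addrC subrK.
have -> : yb + T (f k) `^ gamma *: vk (f k) = yt (f k).
  by rewrite /vk scalerA divff // scale1r addrC subrK.
exact: hN.
Qed.
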